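(* Let $\Delta$ be a finite, flag, simply connected simplicial complex and $\mathcal{P}_H$ as in the context. If $(C_i)_{i=0}^m$ is a combinatorial null-homotopy for the combinatorial 1-cycle $e_1\cdot\ldots\cdot e_l$, then for every $n\in\mathbb{Z}$ the word $e_1^n\cdots e_l^n$ has $\mathrm{Area}_{\mathcal{P}_H}(e_1^n\cdots e_l^n)\le 3m|n|^2$.
   Context: $\mathrm{Edge}(\Delta)$ is the set of directed edges of $\Delta$; for $e$ in it, $\iota e$, $\tau e$ are its initial and terminal vertices and $\overline{e}$ is the reversed edge. $e_1\cdot\ldots\cdot e_l$ is a combinatorial path if $\tau e_i=\iota e_{i+1}$, and a combinatorial 1-cycle if also $\tau e_l=\iota e_1$ (the empty cycle $\emptyset$ allowed). $\mathcal{P}_H=\langle\mathrm{Edge}(\Delta)\mid\mathcal{R}_H\rangle$ where $\mathcal{R}_H$ consists of the words $e\overline{e}$ ($e\in\mathrm{Edge}(\Delta)$) and $efg$, $e^{-1}f^{-1}g^{-1}$ for every combinatorial 1-cycle $e\cdot f\cdot g$. $\mathrm{Area}_{\mathcal{P}_H}(w)$ is the least $m$ such that $w$ is freely equal to $\prod_{i=1}^m x_ir_ix_i^{-1}$ with $r_i\in\mathcal{R}_H^{\pm1}$. For a letter $e$ and $k\in\mathbb{Z}$, $e^k$ is the word of $k$ copies of $e$ if $k\ge0$ and $|k|$ copies of $e^{-1}$ if $k<0$. A combinatorial null-homotopy for a 1-cycle $C$ is a sequence $(C_i)_{i=0}^m$ of combinatorial 1-cycles with $C_0=C$, $C_m=\emptyset$,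 and each $C_{i+1}$ obtained from $C_i=e_1\cdot\ldots\cdot e_l$ by one of: inserting $e\cdot\overline{e}$ (some $e\in\mathrm{Edge}(\Delta)$) between $e_k$ and $e_{k+1}$ for some $k$ (1-cell expansion) or the reverse deletion (1-cell collapse); inserting $e\cdot f\cdot g$, where $e\cdot f\cdot g$ is a combinatorial 1-cycle, between $e_k$ and $e_{k+1}$ (2-cell expansion) or the reverse deletion (2-cell collapse). *)

(* Defs.v *)
From mathcomp Require Import all_boot all_order all_algebra.
From Stdlib Require Import Relations.
Set Implicit Arguments. Unset Strict Implicit. Unset Printing Implicit Defensive.

Section Defs.
Variable V : finType.
Variable D : {set {set V}}.

Definition is_scomplex : Prop :=
  [/\ set0 \notin D,
      (forall v : V, [set v] \in D) &
      (forall s t : {set V}, s \in D -> t \subset s -> t != set0 -> t \in D)].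

(* Directed edges: ordered pairs (iota e, tau e) of distinct vertices
   spanning a 1-simplex. *)
Definition is_edge (e : V * V) : bool := (e.1 != e.2) && ([set e.1; e.2] \in D).

Definition rev_edge (e : V * V) : V * V := (e.2, e.1).

Definition is_flag : Prop :=
  forall s : {set V}, s != set0 ->
    (forall u v, u \in s -> v \in s -> u != v -> is_edge (u, v)) -> s \in D.

(* combinatorial 1-cycle (empty allowed): consecutive edges match and the
   last terminal vertex is the first initial vertex. *)
Definition comb_cycle (c : seq (V * V)) : bool :=
  all is_edge c && cycle (fun e f : V * V => e.2 == f.1) c.

Definition expansion (c c' : seq (V * V)) : Prop :=
  exists (k : nat) (ins : seq (V * V)),
    [/\ k <= size c,
        c' = take k c ++ ins ++ drop k c &
        (exists e, is_edge e /\ ins = [:: e; rev_edge e]) \/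
        (exists e f g, comb_cycle [:: e; f; g] /\ ins = [:: e; f; g])].

Definition homotopy_move (c c' : seq (V * V)) : Prop :=
  expansion c c' \/ expansion c' c.

Definition null_homotopy (C : seq (seq (V * V))) (c : seq (V * V)) (m : nat) : Prop :=
  [/\ size C = m.+1,
      nth [::] C 0 = c,
      nth [::] C m = [::],
      all comb_cycle C &
      forall i, i < m -> homotopy_move (nth [::] C i) (nth [::] C i.+1)].

Definition simply_connected : Prop :=
  (forall u v : V, connect (fun x y => is_edge (x, y)) u v) /\
  (forall c, comb_cycle c -> exists C m, null_homotopy C c m).

(* Words in the free group on Edge(D): letters (e, true) = e, (e, false) = e^-1. *)
Definition letter := ((V * V) * bool)%type.
Definition inv_letter (a : letter) : letter := (a.1, ~~ a.2).
Definition inv_word (w : seq letter) : seq letter := rev (map inv_letter w).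
Definition word_on_edges (w : seq letter) : bool := all (fun a => is_edge a.1) w.

Definition red1 (w w' : seq letter) : Prop :=
  exists a b x, w = a ++ [:: x; inv_letter x] ++ b /\ w' = a ++ b.
Definition freely_equal : seq letter -> seq letter -> Prop :=
  clos_refl_sym_trans _ red1.

Definition pos (e : V * V) : letter := (e, true).
Definition neg (e : V * V) : letter := (e, false).

Definition is_relator (r : seq letter) : Prop :=
  (exists e, is_edge e /\ r = [:: pos e; pos (rev_edge e)]) \/
  (exists e f g, comb_cycle [:: e; f; g] /\
     (r = [:: pos e; pos f; pos g] \/ r = [:: neg e; neg f; neg g])).

Definition is_relator_pm (r : seq letter) : Prop :=
  is_relator r \/ is_relator (inv_word r).

(* Area_{P_H}(w) <= k : w is freely equal to a product of at most k
   conjugates x_i r_i x_i^-1 with r_i in R_H^{+-1}. *)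
Definition area_le (w : seq letter) (k : nat) : Prop :=
  exists L : seq (seq letter * seq letter),
    [/\ size L <= k,
        all (fun p => word_on_edges p.1) L,
        (forall p, p \in L -> is_relator_pm p.2) &
        freely_equal w (flatten [seq p.1 ++ p.2 ++ inv_word p.1 | p <- L])].

End Defs.

Definition epow (V : finType) (e : V * V) (n : int) : seq (letter V) :=
  if (0 <= n)%R then nseq `|n|%N (pos e) else nseq `|n|%N (neg e).

Definition cycle_power (V : finType) (c : seq (V * V)) (n : int) : seq (letter V) :=
  flatten [seq epow e n | e <- c].

(* Main.v *)
Require Import Defs.
From mathcomp Require Import all_boot all_order all_algebra.
From mathcomp Require Import zify.
From Stdlib Require Import Relations.
Set Implicit Arguments. Unset Strict Implicit. Unset Printing Implicit Defensive.

Section Aux.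
Variable V : finType.
Variable Dc : {set {set V}}.
Notation L := (letter V).

Lemma inv_letterK (x : L) : inv_letter (inv_letter x) = x.
Proof. by case: x => a b; rewrite /inv_letter /= negbK. Qed.

Lemma inv_wordK (w : seq L) : inv_word (inv_word w) = w.
Proof.
rewrite /inv_word map_rev revK -map_comp.
by rewrite (eq_map (g := id)) ?map_id // => x; rewrite /= inv_letterK.
Qed.

Lemma fe_refl (u : seq L) : freely_equal u u.
Proof. exact: rst_refl. Qed.
Lemma fe_sym (u v : seq L) : freely_equal u v -> freely_equal v u.
Proof. exact: rst_sym. Qed.
Lemma fe_trans (u v w : seq L) : freely_equal u v -> freely_equal v w -> freely_equal u w.
Proof. exact: rst_trans. Qed.
Lemma fe_red (a b : seq L) x : freely_equal (a ++ [:: x; inv_letter x] ++ b) (a ++ b).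
Proof. by apply: rst_step; exists a, b, x. Qed.

Lemma fe_ctx (x y u v : seq L) : freely_equal u v -> freely_equal (x ++ u ++ y) (x ++ v ++ y).
Proof.
elim => [u1 v1 [a [b [z [-> ->]]]]| u1| u1 v1 _ IH| u1 v1 w1 _ IH1 _ IH2].
- have := fe_red (x ++ a) (b ++ y) z.
  by rewrite -?catA /=; rewrite -?catA.
- exact: fe_refl.
- exact: fe_sym.
- exact: fe_trans IH2.
Qed.

Lemma fe_cancel (x a y : seq L) : freely_equal (x ++ inv_word a ++ a ++ y) (x ++ y).
Proof.
elim: a => [|h a IH] /=; first exact: fe_refl.
have -> : inv_word (h :: a) = inv_word a ++ [:: inv_letter h].
  by rewrite /inv_word /= rev_cons -cats1.
apply: fe_trans IH.
have := fe_red (x ++ inv_word a) (a ++ y) (inv_letter h).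
by rewrite inv_letterK -!catA.
Qed.

Lemma area_fe w w' k : freely_equal w w' -> area_le Dc w' k -> area_le Dc w k.
Proof.
move=> hf [Ls [h1 h2 h3 h4]]; exists Ls; split=> //; exact: fe_trans h4.
Qed.

Lemma area_mono w k k' : k <= k' -> area_le Dc w k -> area_le Dc w k'.
Proof. move=> hk [Ls [h1 h2 h3 h4]]; exists Ls; split=> //; exact: leq_trans hk. Qed.

Lemma area_nil : area_le Dc [::] 0.
Proof. by exists [::]; split => //; exact: fe_refl. Qed.

Lemma area_ins a r b k : word_on_edges Dc a -> is_relator_pm Dc r ->
  area_le Dc (a ++ b) k -> area_le Dc (a ++ r ++ b) k.+1.
Proof.
move=> ha hr [Ls [h1 h2 h3 h4]]; exists ((a, r) :: Ls); split.
- by [].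
- by rewrite /= ha h2.
- by move=> p; rewrite in_cons => /orP [/eqP -> //|]; apply: h3.
- apply: (fe_trans (v := (a ++ r) ++ inv_word a ++ a ++ b)).
    rewrite -!catA; apply: fe_sym; have := fe_cancel (a ++ r) a b; by rewrite -!catA.
  have := fe_ctx (a ++ r ++ inv_word a) [::] h4.
  rewrite /= !cats0 -?catA; move=> H; rewrite -?catA; exact: H. 
Qed.

Lemma relpm_inv r : is_relator_pm Dc r -> is_relator_pm Dc (inv_word r).
Proof. by case=> h; [right; rewrite inv_wordK | left]. Qed.

Inductive der : seq L -> seq L -> nat -> Prop :=
| der_free u v : freely_equal u v -> der u v 0
| der_ins r : is_relator_pm Dc r -> der [::] r 1
| der_del r : is_relator_pm Dc r -> der r [::] 1
| der_ctx x y u v k : word_on_edges Dc x -> der u v k -> der (x ++ u ++ y) (x ++ v ++ y) k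
| der_trans u v w k1 k2 : der u v k1 -> der v w k2 -> der u w (k1 + k2)
| der_mono u v k k' : k <= k' -> der u v k -> der u v k'.

Lemma der_sound u v k : der u v k -> forall a b k0, word_on_edges Dc a ->
  area_le Dc (a ++ v ++ b) k0 -> area_le Dc (a ++ u ++ b) (k0 + k).
Proof.
elim => {u v k}.
- move=> u v hf a b k0 ha; rewrite addn0; apply: area_fe; exact: fe_ctx.
- move=> r hr a b k0 ha hA /=; rewrite addn1.
  apply: (area_fe (w' := a ++ inv_word r ++ (r ++ b))).
    by apply: fe_sym; apply: fe_cancel.
  by apply: area_ins => //; apply: relpm_inv.
- move=> r hr a b k0 ha /= hA; rewrite addn1; exact: area_ins.
- move=> x y u v k hx _ IH a b k0 ha hA.
  have := IH (a ++ x) (y ++ b) k0; rewrite -!catA; apply.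
    by rewrite /word_on_edges all_cat; apply/andP.
  by rewrite -!catA in hA.
- move=> u v w k1 k2 _ IH1 _ IH2 a b k0 ha hA.
  rewrite (addnC k1) addnA; exact: (IH1 a b (k0 + k2) ha (IH2 a b k0 ha hA)).
- move=> u v k k' hk _ IH a b k0 ha hA.
  apply: area_mono (IH a b k0 ha hA); by rewrite leq_add2l.
Qed.

Lemma der_sym u v k : der u v k -> der v u k.
Proof.
elim => {u v k}.
- by move=> u v h; apply: der_free; apply: fe_sym.
- by move=> r h; apply: der_del.
- by move=> r h; apply: der_ins.
- by move=> x y u v k hx _ IH; apply: der_ctx.
- by move=> u v w k1 k2 _ IH1 _ IH2; rewrite addnC; apply: der_trans IH1.
- by move=> u v k k' hk _ IH; apply: der_mono IH.
Qed.

Lemma der_fe u v : freely_equal u v -> der u v 0.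
Proof. exact: der_free. Qed.

Lemma der_ctx' x y u v k u' v' : word_on_edges Dc x -> der u v k ->
  u' = x ++ u ++ y -> v' = x ++ v ++ y -> der u' v' k.
Proof. by move=> hx hd -> ->; apply: der_ctx. Qed.

Lemma nseqSr (x : L) N : nseq N.+1 x = nseq N x ++ [:: x].
Proof. by elim: N => //= N ->. Qed.

Lemma woe_nseq (x : L) N : is_edge Dc x.1 -> word_on_edges Dc (nseq N x).
Proof. by move=> h; rewrite /word_on_edges all_nseq h orbT. Qed.

Lemma woe_cat u v : word_on_edges Dc (u ++ v) = word_on_edges Dc u && word_on_edges Dc v.
Proof. by rewrite /word_on_edges all_cat. Qed.

Lemma woe_cons x u : word_on_edges Dc (x :: u) = is_edge Dc x.1 && word_on_edges Dc u.
Proof. by []. Qed.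

Lemma der_pair (x y : L) N : is_edge Dc x.1 -> is_relator_pm Dc [:: x; y] ->
  der (nseq N x ++ nseq N y) [::] N.
Proof.
move=> hx hr; elim: N => [|N IH]; first exact: der_fe (fe_refl _).
apply: (der_mono (k := N + 1)); first by rewrite addn1.
apply: der_trans (der_del hr).
apply: (der_ctx' (x := [:: x]) (y := [:: y]) _ IH) => //=.
  by rewrite /word_on_edges /= hx.
by rewrite -catA /= -nseqSr /=.
Qed.

Section Tri.
Variables x y z : L.
Hypotheses (hx : is_edge Dc x.1) (hy : is_edge Dc y.1) (hz : is_edge Dc z.1).
Hypotheses (r1 : is_relator_pm Dc [:: x; y; z]) (r2 : is_relator_pm Dc [:: z; y; x]).

Lemma woe1 (a : L) : is_edge Dc a.1 -> word_on_edges Dc [:: a].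
Proof. by move=> h; rewrite /word_on_edges /= h. Qed.

Lemma hix : is_edge Dc (inv_letter x).1. Proof. exact: hx. Qed.
Lemma hiz : is_edge Dc (inv_letter z).1. Proof. exact: hz. Qed.

Lemma tri_a : der [:: y; z] [:: inv_letter x] 1.
Proof.
rewrite -[1]add0n; apply: (der_trans (v := [:: inv_letter x; x; y; z])).
  apply: der_fe; apply: fe_sym.
  have := fe_red [::] [:: y; z] (inv_letter x); by rewrite inv_letterK.
apply: (der_ctx' (x := [:: inv_letter x]) (y := [::]) _ (der_del r1)) => //.
exact: woe1 hix.
Qed.

Lemma tri_b : der [:: x; y] [:: y; x] 2.
Proof.
rewrite -[2]add0n; apply: (der_trans (v := [:: x; y; z; inv_letter z])).
  apply: der_fe; apply: fe_sym; exact: (fe_red [:: x; y] [::] z).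
rewrite -[2]/(1 + 1); apply: (der_trans (v := [:: inv_letter z])).
  exact: (der_ctx' (x := [::]) (y := [:: inv_letter z]) _ (der_del r1)).
rewrite -[1]addn0; apply: (der_trans (v := [:: inv_letter z; z; y; x])).
  exact: (der_ctx' (x := [:: inv_letter z]) (y := [::]) (woe1 hiz) (der_ins r2)).
apply: der_fe.
have := fe_red [::] [:: y; x] (inv_letter z); by rewrite inv_letterK.
Qed.

Lemma tri_c : der [:: y; inv_letter x] [:: inv_letter x; y] 2.
Proof.
rewrite -[2]add0n; apply: (der_trans (v := [:: inv_letter x; x; y; inv_letter x])).
  apply: der_fe; apply: fe_sym.
  have := fe_red [::] [:: y; inv_letter x] (inv_letter x); by rewrite inv_letterK.
rewrite -[2]addn0; apply: (der_trans (v := [:: inv_letter x; y; x; inv_letter x])).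
  exact: (der_ctx' (x := [:: inv_letter x]) (y := [:: inv_letter x]) (woe1 hix) tri_b).
apply: der_fe; exact: (fe_red [:: inv_letter x; y] [::] x).
Qed.

Lemma tri_d N : der (nseq N y ++ [:: inv_letter x]) ([:: inv_letter x] ++ nseq N y) (2 * N).
Proof.
elim: N => [|N IH]; first exact: der_fe (fe_refl _).
rewrite mulnS addnC; apply: (der_trans (v := [:: y] ++ [:: inv_letter x] ++ nseq N y)).
  apply: (der_ctx' (x := [:: y]) (y := [::]) (woe1 hy) IH); by rewrite /= ?cats0.
by apply: (der_ctx' (x := [::]) (y := nseq N y) _ tri_c).
Qed.

Lemma der_tri N : der (nseq N x ++ nseq N y ++ nseq N z) [::] (N * N).
Proof.
elim: N => [|N IH]; first exact: der_fe (fe_refl _).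
apply: (der_mono (k := 1 + (2 * N + (0 + N * N)))); first lia.
apply: (der_trans (v := (x :: nseq N x ++ nseq N y) ++ [:: inv_letter x] ++ nseq N z)).
  apply: (der_ctx' (x := x :: nseq N x ++ nseq N y) (y := nseq N z) _ tri_a).
    by rewrite woe_cons hx woe_cat !woe_nseq.
    by rewrite [nseq N.+1 y]nseqSr /= -!catA.
    by [].
apply: (der_trans (v := (x :: nseq N x) ++ [:: inv_letter x] ++ nseq N y ++ nseq N z)).
  apply: (der_ctx' (x := x :: nseq N x) (y := nseq N z) _ (tri_d N)).
    by rewrite woe_cons hx woe_nseq.
  by rewrite /= -!catA.
  by [].  
apply: der_trans IH.
apply: der_fe.
have -> : x :: nseq N x = nseq N x ++ [:: x] by rewrite -nseqSr.
have := fe_red (nseq N x) (nseq N y ++ nseq N z) x; by rewrite -?catA.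
Qed.
End Tri.

End Aux.

Section Main.
Variable V : finType.
Variable Dc : {set {set V}}.

Lemma cp_cat (s1 s2 : seq (V * V)) n :
  cycle_power (s1 ++ s2) n = cycle_power s1 n ++ cycle_power s2 n.
Proof. by rewrite /cycle_power map_cat flatten_cat. Qed.

Lemma woe_cp (s : seq (V * V)) n : all (is_edge Dc) s -> word_on_edges Dc (cycle_power s n).
Proof.
elim: s => [|e s IH] //= /andP [he hs].
rewrite woe_cat IH // andbT /epow; case: (0 <= n)%R; exact: woe_nseq.
Qed.

Lemma is_edge_rev (e : V * V) : is_edge Dc e -> is_edge Dc (rev_edge e).
Proof. by case: e => a b; rewrite /is_edge /= eq_sym setUC. Qed.

Lemma rev_edgeK (e : V * V) : rev_edge (rev_edge e) = e.
Proof. by case: e. Qed.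

Lemma der_insw (ins : seq (V * V)) n :
  (exists e, is_edge Dc e /\ ins = [:: e; rev_edge e]) \/
  (exists e f g, comb_cycle Dc [:: e; f; g] /\ ins = [:: e; f; g]) ->
  der Dc (cycle_power ins n) [::] (3 * `|n|%N ^ 2).
Proof.
case=> [[e [he ->]] | [e [f [g [hc ->]]]]]; rewrite /cycle_power /= /epow cats0.
- apply: (der_mono (k := `|n|%N)); first by rewrite -mulnn; nia.
  case: (0 <= n)%R; apply: der_pair => //.
  + by left; left; exists e.
  + right; rewrite /inv_word /=; left; exists (rev_edge e); split.
      exact: is_edge_rev.
    by rewrite rev_edgeK.
- move: (hc) => /andP [/and4P [he hf hg _] _].
  apply: (der_mono (k := `|n|%N * `|n|%N)); first by rewrite -mulnn; nia.
  case: (0 <= n)%R; apply: der_tri => //.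
  + by left; right; exists e, f, g; split => //; left.
  + by right; rewrite /inv_word /=; right; exists e, f, g; split => //; right.
  + by left; right; exists e, f, g; split => //; right.
  + by right; rewrite /inv_word /=; right; exists e, f, g; split => //; left.
Qed.

Lemma der_step (c1 c2 : seq (V * V)) n :
  comb_cycle Dc c1 -> comb_cycle Dc c2 -> homotopy_move Dc c1 c2 ->
  der Dc (cycle_power c1 n) (cycle_power c2 n) (3 * `|n|%N ^ 2).
Proof.
move=> h1 h2 [[k [ins [hk -> hins]]] | [k [ins [hk -> hins]]]].
- apply: der_sym.
  apply: (der_ctx' (x := cycle_power (take k c1) n) (y := cycle_power (drop k c1) n) _ (der_insw n hins)).
  + apply: woe_cp; move: h1 => /andP [ha _]; move: ha.
    by rewrite -{1}(cat_take_drop k c1) all_cat => /andP [].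
  + by rewrite !cp_cat.
  + by rewrite -{1}(cat_take_drop k c1) cp_cat.
- apply: (der_ctx' (x := cycle_power (take k c2) n) (y := cycle_power (drop k c2) n) _ (der_insw n hins)).
  + apply: woe_cp; move: h2 => /andP [ha _]; move: ha.
    by rewrite -{1}(cat_take_drop k c2) all_cat => /andP [].
  + by rewrite !cp_cat.
  + by rewrite -{1}(cat_take_drop k c2) cp_cat.
Qed.

End Main.

Theorem lemma4p6 (V : finType) (D : {set {set V}})
  (hD : is_scomplex D) (hflag : is_flag D) (hsc : simply_connected D)
  (c : seq (V * V)) (hc : comb_cycle D c)
  (C : seq (seq (V * V))) (m : nat) (hC : null_homotopy D C c m) :
  forall n : int, area_le D (cycle_power c n) (3 * m * `|n|%N ^ 2).
Proof.
move=> n; case: hC => hs h0 hm hall hmove.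
suff H : forall j, j <= m -> area_le D (cycle_power (nth [::] C (m - j)) n) (3 * j * `|n|%N ^ 2).
  by have := H m (leqnn m); rewrite subnn h0.
elim=> [|j IH] hj.
  by rewrite subn0 hm muln0 mul0n; exact: area_nil.
have hi : m - j.+1 < m by lia.
have hS : (m - j.+1).+1 = m - j by lia.
have hcc : forall i, i < m.+1 -> comb_cycle D (nth [::] C i).
  by move=> i hi'; apply: (allP hall); apply: mem_nth; rewrite hs.
have hmv := hmove _ hi; rewrite hS in hmv.
have hmj : m - j < m.+1 by lia.
have hd := der_step n (hcc _ (ltnW hi)) (hcc (m - j) hmj) hmv.
have := der_sound hd (a := [::]) (b := [::]) (k0 := 3 * j * `|n|%N ^ 2) isT.
rewrite /= !cats0 => /(_ (IH (ltnW hj))).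
apply: area_mono; rewrite mulnSr mulnDl; lia.
Qed.
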